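(* Let $\mathcal{D}$ be the arena of a $p$-periodic graph on $V$, $k\ge1$, and $\mathcal{A}^k$ an augmented $k$-arena of $\mathcal{D}$. Then $\mathcal{A}^k=\mathcal{A}^k_{\max}$ if and only if for every $k$-hyperedge $(t,X,y)\notin\mathcal{A}^k$, with $X=\langle x_1,\dots,x_k\rangle$, there is no $Z=\langle z_1,\dots,z_k\rangle\in[V]^k$ such that (1) $z_j\in\Gamma_t(x_j,\mathcal{D})$ for all $1\le j\le k$, and (2) $(t,y)$ is a shadow $k$-corner of $([t+1]_p,Z)$ with respect to $\mathcal{A}^k$.
   Context: Let $V$ be a finite set and $p\ge 1$ an integer; $[t]_p$ denotes $t\bmod p$. A $p$-periodic graph is the sequence of directed graphs $G_t=(V,E_{[t]_p})$ with $E_0,\dots,E_{p-1}\subseteq V\times V$ (self-loops allowed), each sinkless. Its arena $\mathcal{D}$ is the directed graph on $\mathbb{Z}_p\times V$ with $((i,u),([i+1]_p,v))\in E(\mathcal{D})$ iff $(u,v)\in E_i$; $\Gamma_t(u,\mathcal{D})=\{v:((t,u),([t+1]_p,v))\in E(\mathcal{D})\}$. $[V]^k$ denotes the set of multisets of $k$ elements of $V$. Game with $k$ cops: in each round $t$, with cops at $C=\langle c_1,\dots,c_k\rangle$ and robber at $r$, every cop $j$ must move to some $c_j'\in\Gamma_{[t]_p}(c_j,\mathcal{D})$; if some $c_j'=r$ the cops win; otherwise the robber must move to some $r'\in\Gamma_{[t]_p}(r,\mathcal{D})$ and the next round starts with cops at $\langle c_1',\dots,c_k'\rangle$ and robber at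 $r'$. A configuration $(t,C,r)$ ($t\in\mathbb{Z}_p$, $C\in[V]^k$, $r\in V$) is the state at the start of a round with index $\equiv t\pmod p$, cops to move; it is $k$-copwin if from it the cops can force capture in finitely many rounds against every robber strategy. A $k$-hyperedge is a triple $(t,X,y)$ with $t\in\mathbb{Z}_p$, $X\in[V]^k$, $y\in V$. The $k$-arena $\mathcal{D}^k$ is the set of $k$-hyperedges $(t,X,y)$ with $((t,x),([t+1]_p,y))\in E(\mathcal{D})$ for some $x\in X$. An augmented $k$-arena is a set $\mathcal{A}^k\supseteq\mathcal{D}^k$ of $k$-hyperedges such that each $(t,X,y)\in\mathcal{A}^k$ is a $k$-copwin configuration; $\mathcal{A}^k_{\max}$ is the maximum one (the union of all augmented $k$-arenas). For a set $\mathcal{A}^k$ of $k$-hyperedges, $\Gamma_t(X,\mathcal{A}^k)=\{y\in V:(t,X,y)\in\mathcal{A}^k\}$. Given $\mathcal{A}^k$, $(t,y)$ is a shadow $k$-corner of $([t+1]_p,Z)$, where $Z\in[V]^k$, if $y\notin Z$ and $\Gamma_t(y,\mathcal{D})\subseteq\Gamma_{[t+1]_p}(Z,\mathcal{A}^k)$. *)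

(* Defs.v *)
From mathcomp Require Import all_boot.
Set Implicit Arguments. Unset Strict Implicit. Unset Printing Implicit Defensive.

(* Multisets [V]^k : multiplicity functions V -> nat of total size k. *)
Definition mset (V : finType) (k : nat) :=
  {m : {ffun V -> nat} | \sum_(v : V) m v == k}.

Lemma sum_count_mem (V : finType) (s : seq V) :
  \sum_(v : V) count_mem v s = size s.
Proof.
elim: s => [|a s IH] /=; first by rewrite big1.
rewrite big_split /= IH (bigD1 a) //= eqxx big1 ?addn0 // => v /negbTE.
by rewrite eq_sym => ->.
Qed.

Lemma ms_proof (V : finType) (k : nat) (x : k.-tuple V) :
  \sum_(v : V) [ffun v => count_mem v x] v == k.
Proof.
under eq_bigr => v _ do rewrite ffunE.
by rewrite sum_count_mem size_tuple.
Qed.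

(* ms x = the multiset <x_1, ..., x_k> of the entries of the tuple x. *)
Definition ms (V : finType) (k : nat) (x : k.-tuple V) : mset V k :=
  exist _ [ffun v => count_mem v x] (ms_proof x).

Definition in_ms (V : finType) (k : nat) (X : mset V k) (v : V) : bool :=
  0 < sval X v.

(* A p-periodic graph: E i is the edge relation E_i, i : 'I_p.
   [t+1]_p is ordS t.  Gamma_t(u, D) = [set v | E t u v]. *)
Definition sinkless (V : finType) (p : nat) (E : 'I_p -> rel V) : Prop :=
  forall (i : 'I_p) (u : V), exists v : V, E i u v.

(* k-copwin configurations (t, C, r), cops to move: least fixed point
   (attractor) of "the cops have a move after which either the robber is
   caught, or every robber move leads to a copwin configuration". *)
Inductive copwin (V : finType) (p k : nat) (E : 'I_p -> rel V)
  : 'I_p -> mset V k -> V -> Prop :=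
| copwin_step (t : 'I_p) (c c' : k.-tuple V) (r : V) :
    (forall j : 'I_k, E t (tnth c j) (tnth c' j)) ->
    (r \in c' \/
     (forall r' : V, E t r r' -> copwin E (ordS t) (ms c') r')) ->
    copwin E t (ms c) r.

Definition hyperedges (V : finType) (p k : nat) := 'I_p -> mset V k -> V -> Prop.

Definition karena (V : finType) (p k : nat) (E : 'I_p -> rel V)
  : hyperedges V p k :=
  fun t X y => exists2 x : V, in_ms X x & E t x y.

Definition augmented_karena (V : finType) (p k : nat) (E : 'I_p -> rel V)
  (A : hyperedges V p k) : Prop :=
  (forall t X y, karena E t X y -> A t X y) /\
  (forall t X y, A t X y -> copwin E t X y).

Definition Amax (V : finType) (p k : nat) (E : 'I_p -> rel V)
  : hyperedges V p k :=
  fun t X y => exists2 A : hyperedges V p k, augmented_karena E A & A t X y.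

Definition shadow_corner (V : finType) (p k : nat) (E : 'I_p -> rel V)
  (A : hyperedges V p k) (t : 'I_p) (y : V) (Z : mset V k) : Prop :=
  ~~ in_ms Z y /\ (forall v : V, E t y v -> A (ordS t) Z v).

(* Main.v *)
Require Import Defs.
From mathcomp Require Import all_boot.
From Stdlib Require Import Classical.

Lemma in_ms_ms (V : finType) (k : nat) (c : k.-tuple V) (v : V) :
  in_ms (ms c) v = (v \in c).
Proof. by rewrite /in_ms /= ffunE -has_count has_pred1. Qed.

Lemma copwin_in_A (V : finType) (p k : nat) (E : 'I_p -> rel V)
  (A : hyperedges V p k) (hA : augmented_karena E A)
  (H : forall (t : 'I_p) (X : mset V k) (y : V), ~ A t X y ->
     forall x : k.-tuple V, ms x = X ->
       ~ exists z : k.-tuple V,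
           (forall j : 'I_k, E t (tnth x j) (tnth z j)) /\
           shadow_corner E A t y (ms z)) :
  forall t X r, copwin E t X r -> A t X r.
Proof.
fix IH 4 => t X r [{}t c c' {}r Hm Hor].
case: (classic (A t (ms c) r)) => // nA.
have Hin : r \in c' -> A t (ms c) r.
  case/tnthP=> j ->; apply: hA.1; exists (tnth c j); last exact: Hm.
  by rewrite in_ms_ms mem_tnth.
case: (boolP (r \in c')) => [/Hin //|rn].
case: Hor => [/Hin //|Hr].
exfalso; apply: (H t (ms c) r nA c erefl); exists c'; split => //.
split; first by rewrite in_ms_ms.
by move=> v Hv; apply: IH; apply: Hr.
Qed.

Theorem theorem8 (V : finType) (p k : nat) (E : 'I_p -> rel V)
  (hp : 0 < p) (hE : sinkless E) (hk : 0 < k)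
  (A : hyperedges V p k) (hA : augmented_karena E A) :
  (forall t X y, A t X y <-> Amax E t X y) <->
  (forall (t : 'I_p) (X : mset V k) (y : V), ~ A t X y ->
     forall x : k.-tuple V, ms x = X ->
       ~ exists z : k.-tuple V,
           (forall j : 'I_k, E t (tnth x j) (tnth z j)) /\
           shadow_corner E A t y (ms z)).
Proof.
split.
- move=> Heq t X y nA x Hx [z [Hz [_ Hsc]]].
  have cw : copwin E t X y.
    rewrite -Hx; apply: copwin_step; first exact: Hz.
    by right=> r' /Hsc /hA.2.
  apply: nA; apply/Heq.
  exists (fun t' X' y' => A t' X' y' \/ (t', X', y') = (t, X, y)); last by right.
  split; first by move=> ? ? ? /hA.1; left.
  by move=> t' X' y' [/hA.2 //|[-> -> ->]].
- move=> H t X y; split; first by move=> HA; exists A.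
  case=> A' hA' HA'; exact: (@copwin_in_A _ _ _ _ A hA H _ _ _ (hA'.2 _ _ _ HA')).
Qed.
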